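(* Let $G$ be a group and for $g\in G$ let $\mathcal{C}(G)_g=\mathcal{C}(G)\setminus\{\{g\}\}$ (the coset poset with the singleton coset $\{g\}$ removed). If for some $g\in G$ and some $n\geq 0$ we have $\tilde{H}_n(|\mathcal{C}(G)_g|;\mathbb{Z})=0$, then there is a surjection $\tilde{H}_{n+1}(|\mathcal{C}(G)|;\mathbb{Z})\twoheadrightarrow \tilde{H}_n(|L(G)|;\mathbb{Z})$.
   Context: For a group $G$, the coset poset $\mathcal{C}(G)$ is the set of left cosets of all proper subgroups of $G$ (including the trivial subgroup), ordered by inclusion; $L(G)$ is the poset of proper nontrivial subgroups of $G$ ordered by inclusion; $|P|$ denotes the geometric realization of the order complex (chains) of $P$; $\tilde H_*$ is reduced homology. *)

(* Defs.v *)
From HB Require Import structures.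
From mathcomp Require Import all_boot monoid ssralg ssrint.
From Stdlib Require Import ClassicalEpsilon.

Set Implicit Arguments.
Unset Strict Implicit.
Unset Printing Implicit Defensive.

Import GRing.Theory.

(* A k-element chain (a simplex of dimension k-1) is a list s of size k     *)
(* which is strictly increasing for lt; the empty chain (k = 0) is the      *)
(* (-1)-dimensional simplex of the augmented complex, so the homology of    *)
(* the resulting complex is the REDUCED homology.  Integral chains are      *)
(* represented as finite formal sums: lists of (coefficient, simplex).      *)

Section OrderComplex.

Variables (P : Type) (V : P -> Prop) (lt : P -> P -> Prop).
(* the poset is the set of x : P with V x, ordered strictly by lt *)

Fixpoint strict_chain (s : seq P) : Prop :=
  match s with
  | x :: ((y :: _) as t) => lt x y /\ strict_chain t
  | _ => True
  end.

Definition simplex (k : nat) (s : seq P) : Prop :=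
  size s = k /\ (forall x, List.In x s -> V x) /\ strict_chain s.

Definition fchain := seq (int * seq P).

Definition chain_of (k : nat) (c : fchain) : Prop :=
  forall p, List.In p c -> simplex k p.2.

Definition coef (c : fchain) (s : seq P) : int :=
  \sum_(p <- c) (if excluded_middle_informative (p.2 = s) then p.1 else 0%R).

Definition ch_eq (c d : fchain) : Prop := forall s, coef c s = coef d s.

Definition face (i : nat) (s : seq P) : seq P := take i s ++ drop i.+1 s.

Definition bd (c : fchain) : fchain :=
  flatten [seq [seq (((-1) ^+ i * p.1)%R, face i p.2) | i <- iota 0 (size p.2)]
          | p <- c].

Definition ch_opp (c : fchain) : fchain := [seq ((- p.1)%R, p.2) | p <- c].

Definition is_cycle (k : nat) (c : fchain) : Prop :=
  chain_of k c /\ ch_eq (bd c) [::].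

Definition homologous (k : nat) (c d : fchain) : Prop :=
  exists e, chain_of k.+1 e /\ ch_eq (c ++ ch_opp d) (bd e).

(* A reduced homology class in degree n (simplices with n+1 vertices):
   the set of all cycles homologous to a given cycle. *)
Definition is_hclass (n : nat) (C : fchain -> Prop) : Prop :=
  exists z, is_cycle n.+1 z /\
    forall w, C w <-> (is_cycle n.+1 w /\ homologous n.+1 w z).

Definition rhomology (n : nat) := { C : fchain -> Prop | is_hclass n C }.

Definition hadd (n : nat) (a b c : rhomology n) : Prop :=
  exists x y, proj1_sig a x /\ proj1_sig b y /\ proj1_sig c (x ++ y).

End OrderComplex.

Definition hom_surj (P Q : Type) (VP : P -> Prop) (ltP : P -> P -> Prop)
    (VQ : Q -> Prop) (ltQ : Q -> Q -> Prop) (m n : nat) : Prop :=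
  exists f : rhomology VP ltP m -> rhomology VQ ltQ n,
    (forall a b c, hadd a b c -> hadd (f a) (f b) (f c)) /\
    (forall b, exists a, f a = b).

Section Group.

Local Open Scope group_scope.

Variable G : groupType.

Definition is_subgroup (H : G -> Prop) : Prop :=
  H 1 /\ (forall x y, H x -> H y -> H (x * y)) /\ (forall x, H x -> H x^-1).

Definition is_proper_subgroup (H : G -> Prop) : Prop :=
  is_subgroup H /\ H <> (fun _ => True).

Definition lcoset (g : G) (H : G -> Prop) : G -> Prop :=
  fun x => exists2 h, H h & x = g * h.

(* elements of the coset poset C(G): left cosets of proper subgroups
   (the trivial subgroup included) *)
Definition is_coset (X : G -> Prop) : Prop :=
  exists g H, is_proper_subgroup H /\ X = lcoset g H.

Definition is_coset_minus (g : G) (X : G -> Prop) : Prop :=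
  is_coset X /\ X <> (fun x => x = g).

Definition is_proper_nontrivial_subgroup (H : G -> Prop) : Prop :=
  is_proper_subgroup H /\ H <> (fun x => x = 1).

(* strict inclusion: the order of all three posets *)
Definition sincl (X Y : G -> Prop) : Prop :=
  (forall x, X x -> Y x) /\ X <> Y.

End Group.

Definition rhomology_trivial (P : Type) (V : P -> Prop) (lt : P -> P -> Prop)
    (n : nat) : Prop :=
  forall z : seq (int * seq P), is_cycle V lt n.+1 z -> homologous V lt n.+1 z [::].

(* Main.v *)
Require Import Defs.
From mathcomp Require Import all_boot monoid ssralg ssrint.
From Stdlib Require Import ClassicalEpsilon FunctionalExtensionality PropExtensionality ProofIrrelevance.
Set Implicit Arguments. Unset Strict Implicit. Unset Printing Implicit Defensive.
Import GRing.Theory.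



Section Generic.
Variable P : Type.
Implicit Types (c d e : fchain P) (s t : seq P).
Local Open Scope ring_scope.

Lemma coef_nil s : coef (P:=P) [::] s = 0. Proof. by rewrite /coef big_nil. Qed.
Lemma coef_cons p c s : coef (p :: c) s =
  (if excluded_middle_informative (p.2 = s) then p.1 else 0) + coef c s.
Proof. by rewrite /coef big_cons. Qed.
Lemma coef_cat c d s : coef (c ++ d) s = coef c s + coef d s.
Proof. by rewrite /coef big_cat. Qed.
Lemma coef_opp c s : coef (ch_opp c) s = - coef c s.
Proof.
elim: c => [|p c IH]; first by rewrite /ch_opp /= coef_nil oppr0.
rewrite /ch_opp /= coef_cons -/(ch_opp c) IH coef_cons opprD /=.
by case: excluded_middle_informative => //; rewrite oppr0.
Qed.

Lemma bd_cons p c : bd (p :: c) =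
  [seq (((-1) ^+ i * p.1)%R, face i p.2) | i <- iota 0 (size p.2)] ++ bd c.
Proof. by []. Qed.
Lemma bd_cat c d : bd (c ++ d) = bd c ++ bd d.
Proof. by rewrite /bd map_cat flatten_cat. Qed.
Lemma bd_opp c : bd (ch_opp c) = ch_opp (bd c).
Proof.
elim: c => [|p c IH] //.
rewrite /ch_opp /= -/(ch_opp c) bd_cons IH bd_cons /ch_opp map_cat -map_comp /=.
congr (_ ++ _); apply: eq_map => i /=; by rewrite mulrN.
Qed.

Lemma In_cat (A : Type) (x : A) (l1 l2 : seq A) :
  List.In x (l1 ++ l2) -> List.In x l1 \/ List.In x l2.
Proof. elim: l1 => [|y l IH] /=; first by right. case=> [->|/IH]; tauto. Qed.
Lemma In_catl (A : Type) (x : A) (l1 l2 : seq A) :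
  List.In x l1 -> List.In x (l1 ++ l2).
Proof. elim: l1 => [|y l IH] //=. case=> [->|/IH]; tauto. Qed.
Lemma In_catr (A : Type) (x : A) (l1 l2 : seq A) :
  List.In x l2 -> List.In x (l1 ++ l2).
Proof. elim: l1 => [|y l IH] //=. move=> /IH; tauto. Qed.
Lemma In_map (A B : Type) (f : A -> B) y (l : seq A) :
  List.In y (map f l) -> exists x, List.In x l /\ y = f x.
Proof.
elim: l => [|x l IH] //=. case=> [<-|/IH [z [Hz ->]]]; [exists x|exists z]; tauto.
Qed.
Lemma In_map2 (A B : Type) (f : A -> B) x (l : seq A) :
  List.In x l -> List.In (f x) (map f l).
Proof. elim: l => [|y l IH] //=. case=> [->|/IH]; tauto. Qed.

Variables (V : P -> Prop) (lt : P -> P -> Prop).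

Lemma chain_cat k c d : chain_of V lt k c -> chain_of V lt k d ->
  chain_of V lt k (c ++ d).
Proof. move=> Hc Hd p Hp; case: (In_cat Hp); [exact: Hc|exact: Hd]. Qed.
Lemma chain_opp k c : chain_of V lt k c -> chain_of V lt k (ch_opp c).
Proof. move=> Hc p Hp; have [q [Hq Hpq]] := In_map Hp; subst p; exact: (Hc q Hq). Qed.

Lemma hom_refl k c : homologous V lt k c c.
Proof.
exists [::]; split; first by move=> p [].
by move=> s; rewrite coef_cat coef_opp subrr coef_nil.
Qed.
Lemma hom_sym k c d : homologous V lt k c d -> homologous V lt k d c.
Proof.
case=> e [He Hcd]; exists (ch_opp e); split; first exact: chain_opp.
move=> s; move: (Hcd s); rewrite bd_opp !coef_cat !coef_opp => <-.
by rewrite opprD opprK addrC.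
Qed.
Lemma hom_trans k c d f : homologous V lt k c d -> homologous V lt k d f ->
  homologous V lt k c f.
Proof.
case=> e1 [He1 H1] [e2 [He2 H2]]; exists (e1 ++ e2); split; first exact: chain_cat.
move=> s; move: (H1 s) (H2 s); rewrite bd_cat !coef_cat !coef_opp => <- <-.
by rewrite addrA subrK.
Qed.

End Generic.



Section Cone.
Variables (P : Type) (v : P).
Implicit Types (c d e : fchain P) (s t : seq P).
Local Open Scope ring_scope.

Definition hv s : bool :=
  if excluded_middle_informative (exists t, s = v :: t) then true else false.

Fixpoint hdch c : fchain P :=
  match c with
  | [::] => [::]
  | p :: c' => if hv p.2 then (p.1, behead p.2) :: hdch c' else hdch c'
  end.

Definition mapch (Q : Type) (f : P -> Q) c : fchain Q := [seq (p.1, map f p.2) | p <- c].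
Definition cone c : fchain P := [seq (p.1, v :: p.2) | p <- c].

Lemma hv_cons t : hv (v :: t) = true.
Proof. rewrite /hv; case: excluded_middle_informative => // H; exfalso; apply: H; by exists t. Qed.
Lemma hvP s : hv s = true -> exists t, s = v :: t.
Proof. rewrite /hv; by case: excluded_middle_informative. Qed.
Lemma hv_notin s : ~ List.In v s -> hv s = false.
Proof.
move=> Hn; rewrite /hv; case: excluded_middle_informative => // [[t Ht]].
by exfalso; apply: Hn; rewrite Ht; left.
Qed.

Lemma hdch_cat c d : hdch (c ++ d) = hdch c ++ hdch d.
Proof. elim: c => [|p c IH] //=; by case: (hv p.2); rewrite IH. Qed.
Lemma hdch_opp c : hdch (ch_opp c) = ch_opp (hdch c).
Proof. elim: c => [|p c IH] //=; by case: (hv p.2); rewrite /= IH. Qed.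
Lemma hdch_cone c : hdch (cone c) = c.
Proof. elim: c => [|[x t] c IH] //=; by rewrite hv_cons /= IH. Qed.
Lemma hdch_nil c : (forall p, List.In p c -> hv p.2 = false) -> hdch c = [::].
Proof.
elim: c => [|p c IH] //= H; rewrite H; last by left.
apply: IH => q Hq; apply: H; by right.
Qed.
Lemma In_hdch q c : List.In q (hdch c) ->
  exists p, List.In p c /\ hv p.2 = true /\ q = (p.1, behead p.2).
Proof.
elim: c => [|p c IH] //=.
case E: (hv p.2) => /=.
  case=> [<-|/IH [r [H1 H2]]]; [exists p|exists r]; tauto.
move=> /IH [r [H1 H2]]; exists r; tauto.
Qed.

Lemma coef_hdch c s : coef (hdch c) s = coef c (v :: s).
Proof.
elim: c => [|p c IH] /=; first by rewrite !coef_nil.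
case E: (hv p.2); last first.
  rewrite coef_cons IH; case: excluded_middle_informative => H; last by rewrite add0r.
  by move: E; have -> : hv p.2 = true by rewrite H hv_cons.
have [t Ht] := hvP E.
rewrite !coef_cons IH Ht /=.
case: excluded_middle_informative => H1; case: excluded_middle_informative => H2 //.
- by case: H2; rewrite H1.
- by case: H1; case: H2.
Qed.

Lemma coef_cone c s : coef (cone c) s = if hv s then coef c (behead s) else 0.
Proof.
elim: c => [|p c IH] /=; first by rewrite !coef_nil; case: (hv s).
rewrite !coef_cons IH /=.
case E: (hv s).
  have [t Ht] := hvP E; rewrite Ht /=.
  case: excluded_middle_informative => H1; case: excluded_middle_informative => H2 //.
  - by case: H2; case: H1.
  - by case: H1; rewrite H2.
case: excluded_middle_informative => // H1.
by move: E; have -> : hv s = true by rewrite -H1 hv_cons.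
Qed.

Lemma face_map (Q : Type) (f : P -> Q) i s : face i (map f s) = map f (face i s).
Proof. by rewrite /face map_cat map_take map_drop. Qed.

Lemma bd_mapch (Q : Type) (f : P -> Q) c : bd (mapch f c) = mapch f (bd c).
Proof.
elim: c => [|p c IH] //.
rewrite /mapch /= -/(mapch f c) bd_cons IH bd_cons /mapch map_cat -map_comp size_map /=.
congr (_ ++ _); apply: eq_map => i /=; by rewrite face_map.
Qed.
Lemma mapch_opp (Q : Type) (f : P -> Q) c : mapch f (ch_opp c) = ch_opp (mapch f c).
Proof. by rewrite /mapch /ch_opp -!map_comp. Qed.
Lemma mapch_cat (Q : Type) (f : P -> Q) c d : mapch f (c ++ d) = mapch f c ++ mapch f d.
Proof. by rewrite /mapch map_cat. Qed.
Lemma coef_mapch (Q : Type) (f : P -> Q) (f' : Q -> P) :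
  cancel f f' -> cancel f' f -> forall c (u : seq Q), coef (mapch f c) u = coef c (map f' u).
Proof.
move=> K1 K2; elim=> [|p c IH] u /=; first by rewrite !coef_nil.
rewrite /mapch /= -/(mapch f c) !coef_cons IH /=.
case: excluded_middle_informative => H1; case: excluded_middle_informative => H2 //.
- by case: H2; rewrite -H1 (mapK K1).
- by case: H1; rewrite H2 (mapK K2).
Qed.

Lemma In_face y i s : List.In y (face i s) -> List.In y s.
Proof.
elim: s i => [|x s IH] [|i]; rewrite /face /=.
all: try tauto.
- by rewrite drop0 => H; right.
- case=> [->|H]; first by left. by right; apply: (IH i).
Qed.

Lemma Fv x t :
  [seq (((-1) ^+ i * x)%R, face i (v :: t)) | i <- iota 0 (size (v :: t))] =
  (x, t) :: ch_opp (cone [seq (((-1) ^+ i * x)%R, face i t) | i <- iota 0 (size t)]).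
Proof.
rewrite /= expr0 mul1r; congr (_ :: _).
  by rewrite /face /= drop0.
rewrite (iotaDl 1 0 (size t)) /ch_opp /cone -!map_comp; apply: eq_map => i /=.
by rewrite /face /= exprS mulN1r mulNr.
Qed.

Lemma hdch_bd c :
  (forall p, List.In p c -> (forall t, p.2 = v :: t -> hv t = false) /\
                            (hv p.2 = false -> ~ List.In v p.2)) ->
  hdch (bd c) = ch_opp (bd (hdch c)).
Proof.
elim: c => [|p c IH] // H.
have IH' : hdch (bd c) = ch_opp (bd (hdch c)).
  apply: IH => q Hq; apply: H; by right.
have [Hp1 Hp2] := H p (or_introl erefl).
rewrite bd_cons hdch_cat IH'.
case E: (hv p.2).
  have [t Ht] := hvP E; move: Hp1 Hp2 E Ht; case: p H => x s H /= Hp1 Hp2 E Ht; subst s.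
  rewrite Fv /= (Hp1 t erefl) hv_cons /= bd_cons /ch_opp map_cat -!/(ch_opp _).
  by rewrite hdch_opp hdch_cone.
rewrite /= E hdch_nil //.
move=> q Hq; have [i [_ Hqi]] := In_map Hq; subst q => /=.
apply: hv_notin => Hin.
by apply: (Hp2 E); apply: In_face Hin.
Qed.

Lemma bd_cone_coef c s :
  coef (bd (cone c)) s = coef c s + coef (ch_opp (cone (bd c))) s.
Proof.
elim: c => [|[x t] c IH]; first by rewrite /= !coef_nil addr0.
rewrite /cone map_cons -/(cone c) bd_cons Fv /= -/(cone _).
rewrite coef_cons coef_cat IH bd_cons /cone map_cat -!/(cone _) /ch_opp map_cat -!/(ch_opp _).
rewrite !coef_cat coef_cons /=.
rewrite !addrA; congr (_ + _). rewrite -!addrA; congr (_ + _). by rewrite addrC.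
Qed.

End Cone.



Lemma sc_tail (A : Type) (lt : A -> A -> Prop) x t :
  strict_chain lt (x :: t) -> strict_chain lt t.
Proof. by case: t => [|y t] //= [_ H]. Qed.

Lemma sc_map (A B : Type) (ltA : A -> A -> Prop) (ltB : B -> B -> Prop) (f : A -> B) s :
  (forall x y, ltA x y -> ltB (f x) (f y)) -> strict_chain ltA s -> strict_chain ltB (map f s).
Proof.
move=> Hf; elim: s => [|x [|y t] IH] //= [Hxy Hc]; split; first exact: Hf.
exact: IH.
Qed.

Lemma sig_eq (A : Type) (Q : A -> Prop) (a b : {x | Q x}) :
  proj1_sig a = proj1_sig b -> a = b.
Proof.
case: a => x Hx; case: b => y Hy /= E; subst y; f_equal; exact: proof_irrelevance.
Qed.

Section GroupPart.
Variables (G : groupType) (g : G).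
Local Notation PG := (G -> Prop).
Local Open Scope group_scope.
Implicit Types (X Y Z H : PG) (c d e z : fchain PG) (s t : seq PG).

Lemma setext (X Y : PG) : (forall x, X x <-> Y x) -> X = Y.
Proof.
move=> H; apply: functional_extensionality => x; apply: propositional_extensionality; exact: H.
Qed.

Definition vg : PG := fun x => x = g.
Definition tau (X : PG) : PG := fun x => X (g * x).
Definition taui (X : PG) : PG := fun x => X (g^-1 * x).
Lemma tauK : cancel tau taui.
Proof. move=> X; apply: functional_extensionality => x; by rewrite /tau /taui mulVKg. Qed.
Lemma tauiK : cancel taui tau.
Proof. move=> X; apply: functional_extensionality => x; by rewrite /tau /taui mulKg. Qed.

Lemma sincl_trans (X Y Z : PG) : sincl X Y -> sincl Y Z -> sincl X Z.
Proof.
move=> [H1 N1] [H2 N2]; split; first by auto.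
move=> E; subst Z; apply: N1; apply: setext => x; split; auto.
Qed.

Lemma tau_sincl X Y : sincl X Y -> sincl (tau X) (tau Y).
Proof.
move=> [H1 N1]; split; first by move=> x; apply: H1.
move=> E; apply: N1; by rewrite -(tauK X) E tauK.
Qed.
Lemma taui_sincl X Y : sincl X Y -> sincl (taui X) (taui Y).
Proof.
move=> [H1 N1]; split; first by move=> x; apply: H1.
move=> E; apply: N1; by rewrite -(tauiK X) E tauiK.
Qed.

Lemma coset_ne X : is_coset X -> exists x, X x.
Proof.
move=> [a [H [[[H1 _] _] ->]]]; exists a; exists 1 => //; by rewrite mulg1.
Qed.

Lemma not_below_v X : is_coset X -> ~ sincl X vg.
Proof.
move=> /coset_ne [y Hy] [Hs N]; apply: N; apply: setext => x; split; first exact: Hs.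
rewrite /vg => ->; by rewrite -(Hs y Hy).
Qed.

Lemma sc_above x t y : strict_chain (@sincl G) (x :: t) -> List.In y t -> sincl x y.
Proof.
elim: t x => [|z t IH] x //= [Hxz Hc] [<-|Hy] //.
exact: sincl_trans Hxz (IH z Hc Hy).
Qed.

Lemma sc_notin x t : strict_chain (@sincl G) (x :: t) ->
  (forall y, List.In y (x :: t) -> is_coset y) -> ~ List.In vg t.
Proof.
move=> Hc Hv Hin; apply: (not_below_v (Hv x (or_introl erefl))); exact: sc_above Hc Hin.
Qed.

Lemma valid_hd k c : chain_of (@is_coset G) (@sincl G) k c ->
  forall p, List.In p c -> (forall t, p.2 = vg :: t -> hv vg t = false) /\
                          (hv vg p.2 = false -> ~ List.In vg p.2).
Proof.
move=> Hc p Hp; have [_ [Hv Hs]] := Hc p Hp; split.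
  move=> t Ht; apply: hv_notin; apply: (sc_notin (x := vg)); rewrite -Ht //.
move: Hv Hs; case: p.2 => [|x r]; first by move=> _ _ _ [].
move=> Hv Hs E Hin; case: Hin => [Ex|Hin].
  by move: E; rewrite Ex hv_cons.
exact: (sc_notin Hs Hv Hin).
Qed.

Lemma taui_lcoset (H : PG) : is_subgroup H -> taui H = lcoset g H.
Proof.
move=> _; apply: setext => x; split.
  by move=> Hx; exists (g^-1 * x) => //; rewrite mulVKg.
by case=> h Hh ->; rewrite /taui mulKg.
Qed.
Lemma tau_lcoset (H : PG) : is_subgroup H -> tau (lcoset g H) = H.
Proof. by move=> HH; rewrite -(taui_lcoset HH) tauiK. Qed.

Lemma coset_above X : is_coset X -> X g ->
  exists H, is_proper_subgroup H /\ X = lcoset g H.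
Proof.
move=> [a [H [HH ->]]] [h0 Hh0 Eg]; exists H; split => //.
have [[H1 [HM HV]] _] := HH.
apply: setext => x; split.
  case=> h Hh ->; exists (h0^-1 * h); first exact: HM (HV _ Hh0) Hh.
  by rewrite Eg -mulgA mulVKg.
case=> h Hh ->; exists (h0 * h); first exact: HM.
by rewrite Eg mulgA.
Qed.

Lemma lcoset1 : lcoset g (fun x => x = 1) = vg.
Proof.
apply: setext => x; split; first by case=> h -> ->; rewrite mulg1.
by move=> ->; exists 1 => //; rewrite mulg1.
Qed.

Lemma tau_L X : is_coset X -> sincl vg X -> is_proper_nontrivial_subgroup (tau X).
Proof.
move=> HX Hs; have [H [HH EX]] := coset_above HX (proj1 Hs g erefl).
rewrite EX tau_lcoset; last exact: HH.1.
split => // E; apply: (proj2 Hs); by rewrite EX E lcoset1.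
Qed.

Lemma taui_L H : is_proper_nontrivial_subgroup H ->
  is_coset_minus g (taui H) /\ sincl vg (taui H).
Proof.
move=> [HH N]; rewrite (taui_lcoset HH.1).
have Nv : lcoset g H <> vg.
  move=> E; apply: N; apply: setext => x; split.
    move=> Hx; have : lcoset g H (g * x) by exists x.
    rewrite E /vg -{2}(mulg1 g) => /mulgI //.
  by move=> ->; exact: HH.1.1.
split; first by split => //; exists g, H.
split; last by move=> E; apply: Nv.
move=> x ->; exists 1; [exact: HH.1.1 | by rewrite mulg1].
Qed.

Lemma vg_coset : (exists H, is_proper_nontrivial_subgroup H) -> is_coset vg.
Proof.
case=> H [[HH NH] _]; exists g, (fun x => x = 1); rewrite lcoset1; split => //.
split.
  split => //; split; first by move=> x y -> ->; rewrite mulg1.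
  by move=> x ->; rewrite invg1.
move=> E; apply: NH; apply: setext => x; split => // _.
have : x = 1 by have := f_equal (fun F => F x) E => /= ->.
by move=> ->; exact: HH.1.
Qed.

(* the connecting map at chain level *)
Definition f0 (c : fchain PG) : fchain PG := mapch tau (hdch vg c).

Lemma f0_cat c d : f0 (c ++ d) = f0 c ++ f0 d.
Proof. by rewrite /f0 hdch_cat mapch_cat. Qed.
Lemma f0_opp c : f0 (ch_opp c) = ch_opp (f0 c).
Proof. by rewrite /f0 hdch_opp mapch_opp. Qed.

Lemma coef_f0 c s : coef (f0 c) s = coef c (vg :: map taui s).
Proof. by rewrite /f0 (coef_mapch tauK tauiK) coef_hdch. Qed.

Lemma f0_bd k c : chain_of (@is_coset G) (@sincl G) k c -> f0 (bd c) = ch_opp (bd (f0 c)).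
Proof.
move=> Hc; rewrite /f0 hdch_bd; last exact: valid_hd Hc.
by rewrite mapch_opp bd_mapch.
Qed.

Lemma f0_valid k c : chain_of (@is_coset G) (@sincl G) k.+1 c ->
  chain_of (@is_proper_nontrivial_subgroup G) (@sincl G) k (f0 c).
Proof.
move=> Hc p Hp; have [q [Hq ->]] := In_map Hp.
have [r [Hr [Ehv ->]]] := In_hdch Hq.
have [t Ht] := hvP Ehv.
have [Hsz [Hv Hs]] := Hc r Hr; rewrite Ht in Hsz Hv Hs; rewrite /= Ht /=.
split; first by rewrite size_map; case: Hsz.
split; last by apply: sc_map (sc_tail Hs) => X Y; exact: tau_sincl.
move=> X HX; have [Y [HY ->]] := In_map HX.
apply: tau_L; first by apply: Hv; right.
exact: sc_above Hs HY.
Qed.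

Lemma cyc_f0 n z : is_cycle (@is_coset G) (@sincl G) n.+2 z ->
  is_cycle (@is_proper_nontrivial_subgroup G) (@sincl G) n.+1 (f0 z).
Proof.
case=> Hz Hb; split; first exact: f0_valid.
move=> s; have := coef_f0 (bd z) s; rewrite (f0_bd Hz) coef_opp Hb !coef_nil.
by move/eqP; rewrite oppr_eq0 => /eqP.
Qed.

Lemma wd n z z' : homologous (@is_coset G) (@sincl G) n.+2 z z' ->
  homologous (@is_proper_nontrivial_subgroup G) (@sincl G) n.+1 (f0 z) (f0 z').
Proof.
case=> e [He Heq]; exists (ch_opp (f0 e)); split.
  by apply: chain_opp; exact: f0_valid.
move=> s; rewrite bd_opp -(f0_bd He) coef_f0 -(Heq _) -f0_opp -f0_cat coef_f0 //.
Qed.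

End GroupPart.



Section Main.
Variables (G : groupType) (g : G) (n : nat).
Local Notation PG := (G -> Prop).
Local Notation VC := (@is_coset G).
Local Notation VL := (@is_proper_nontrivial_subgroup G).
Local Notation lt := (@sincl G).

Definition fpred (a : rhomology VC lt n.+1) : fchain PG -> Prop :=
  fun w => is_cycle VL lt n.+1 w /\
    exists z, proj1_sig a z /\ homologous VL lt n.+1 w (f0 g z).

Lemma mem_cycle (a : rhomology VC lt n.+1) z : proj1_sig a z -> is_cycle VC lt n.+2 z.
Proof. case: a => A [z0 [_ HA]] /= Az; exact: ((HA z).1 Az).1. Qed.

Lemma fpred_ok a : is_hclass VL lt n (fpred a).
Proof.
case: a => A [z0 [Hz0 HA]]; rewrite /fpred /=.
exists (f0 g z0); split; first apply: (cyc_f0 g Hz0).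
move=> w; split.
  case=> Hw [z [Az Hwz]]; split => //.
  have [Hz Hzz0] := (HA z).1 Az.
  exact: hom_trans Hwz (wd g Hzz0).
case=> Hw Hwz0; split => //; exists z0; split => //.
apply/(HA z0); split => //; exact: hom_refl.
Qed.

Definition fmap (a : rhomology VC lt n.+1) : rhomology VL lt n :=
  exist _ (fpred a) (fpred_ok a).

Lemma fmap_add a b c : hadd a b c -> hadd (fmap a) (fmap b) (fmap c).
Proof.
case=> x [y [Ax [By Cxy]]]; exists (f0 g x), (f0 g y); rewrite /fmap /fpred /=.
split; first by split; [apply: (cyc_f0 g (mem_cycle Ax)) | exists x; split => //; exact: hom_refl].
split; first by split; [apply: (cyc_f0 g (mem_cycle By)) | exists y; split => //; exact: hom_refl].
rewrite -f0_cat; split; first apply: (cyc_f0 g (mem_cycle Cxy)).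
exists (x ++ y); split => //; exact: hom_refl.
Qed.


Lemma exists_z_aux (Hyp : rhomology_trivial (is_coset_minus g) lt n)
  (exL : exists H, VL H) w :
  is_cycle VL lt n.+1 w -> exists z, is_cycle VC lt n.+2 z /\ f0 g z = w.
Proof.
move=> Hw.
pose w' := mapch (taui g) w.
have Hw' : is_cycle (is_coset_minus g) lt n.+1 w'.
  split.
    move=> p Hp; have [q [Hq ->]] := In_map Hp; have [Hsz [Hv Hs]] := Hw.1 q Hq; rewrite /=.
    split; first by rewrite size_map.
    split; last by apply: sc_map Hs => X Y; exact: taui_sincl.
    move=> X HX; have [Y [HY ->]] := In_map HX; exact: (taui_L g (Hv Y HY)).1.
  move=> s; rewrite /w' bd_mapch (coef_mapch (tauiK g) (tauK g)) (Hw.2 _) !coef_nil //.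
have [e [He Heq]] := Hyp w' Hw'.
exists (cone (vg g) w' ++ ch_opp e); split; [split|].
- apply: chain_cat.
  + move=> p Hp; have [q [Hq ->]] := In_map Hp; have [r [Hr ->]] := In_map Hq.
    have [Hsz [Hv Hs]] := Hw.1 r Hr; rewrite /=.
    split; first (rewrite /= size_map; by rewrite Hsz).
    split.
      move=> X [<-|HX]; first exact: vg_coset.
      have [Y [HY ->]] := In_map HX; exact: (taui_L g (Hv Y HY)).1.1.
    move: Hv Hs; case: r.2 => [|Y t] // Hv Hs; split.
      exact: (taui_L g (Hv Y (or_introl erefl))).2.
    exact: (sc_map (@taui_sincl G g) Hs).
  + apply: chain_opp => p Hp; have [Hsz [Hv Hs]] := He p Hp; split => //; split => // X HX.
    exact: (Hv X HX).1.
- move=> s; rewrite bd_cat bd_opp coef_cat coef_opp bd_cone_coef -(Heq s) coef_cat !coef_opp.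
  rewrite coef_cone !coef_nil; case: (hv _ s); rewrite ?(Hw'.2 _) ?coef_nil.
  + by rewrite oppr0 !addr0 subrr.
  + by rewrite oppr0 !addr0 subrr.
- rewrite /f0 hdch_cat hdch_opp hdch_cone (@hdch_nil _ _ e) /= ?cats0.
    rewrite /w' /mapch -map_comp -[RHS]map_id; apply: eq_map => -[x t] /=.
    by rewrite (mapK (tauiK g)).
  move=> p Hp; apply: hv_notin => Hin; have [_ [Hv _]] := He p Hp.
  exact: (Hv _ Hin).2 erefl.
Qed.

Lemma exists_z (Hyp : rhomology_trivial (is_coset_minus g) lt n) w :
  is_cycle VL lt n.+1 w -> exists z, is_cycle VC lt n.+2 z /\ f0 g z = w.
Proof.
case: w => [|p0 w0] Hw.
  exists [::]; split; last by [].
  split; [by move=> p [] | by move=> s].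
apply: exists_z_aux => //.
have [Hsz [Hv _]] := Hw.1 p0 (or_introl erefl).
move: Hsz Hv; case: p0.2 => [|H t] //= _ Hv.
exists H; apply: Hv; by left.
Qed.

End Main.

Theorem mainTheorem11 (G : groupType) (g : G) (n : nat) :
  rhomology_trivial (@is_coset_minus G g) (@sincl G) n ->
  hom_surj (@is_coset G) (@sincl G)
           (@is_proper_nontrivial_subgroup G) (@sincl G) n.+1 n.
Proof.
move=> Hyp; exists (@fmap G g n); split; first exact: fmap_add.
case=> B [w [Hw HB]].
have [z [Hz Ezw]] := exists_z Hyp Hw.
pose A := fun u => is_cycle (@is_coset G) (@sincl G) n.+2 u /\
                   homologous (@is_coset G) (@sincl G) n.+2 u z.
have HA : is_hclass (@is_coset G) (@sincl G) n.+1 A.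
  by exists z; split.
exists (exist _ A HA); apply: sig_eq => /=; rewrite /fpred /=.
apply: functional_extensionality => u; apply: propositional_extensionality; split.
- case=> Hu [z' [[Hz' Hz'z] Hu']]; apply/HB; split => //; rewrite -Ezw.
  exact: hom_trans Hu' (wd g Hz'z).
- move/HB => [Hu Huw]; split => //; exists z; split; first by split => //; exact: hom_refl.
  by rewrite Ezw.
Qed.
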